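(* Under the setting of the FPI method below (with $\phi,\psi$ Lipschitz with constants $L_1,L_2$, $A+\Omega B=M-N$, $M$ nonsingular, and a solution $x^*$ of the VNCP), let $\alpha=\|M^{-1}\|$, $\beta=\|N\|+L_1+L_2\|\Omega\|$, $\gamma=\|A-\Omega B\|+L_1+L_2\|\Omega\|$, $y^*=|(A-\Omega B)x^*+\phi(x^* )-\Omega\psi(x^* )|$, and $$E_\gamma^{(k)}=\begin{bmatrix}\gamma\|x^k-x^*\|\\ \|y^k-y^*\|\end{bmatrix},\qquad T_\gamma=\begin{bmatrix}\alpha\beta & \alpha\gamma\\ \tau\alpha\beta & \tau\alpha\gamma+|1-\tau|\end{bmatrix}.$$ Then for all $k\ge0$, $\|E_\gamma^{(k+1)}\|_\infty\le\|T_\gamma\|_\infty\|E_\gamma^{(k)}\|_\infty$. Moreover, for $\tau>0$, $\|T_\gamma\|_\infty<1$ if and only if $$\alpha(\beta+\gamma)<1\quad\text{and}\quad 0<\tau<\frac{2}{\alpha(\beta+\gamma)+1}.$$ Consequently, if these conditions hold, the sequence $\{x^k\}$ generated by the FPI method converges to $x^*$ (and $x^*$ is the unique solution of the VNCP).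
   Context: The VNCP is: find $x\in\mathbb{R}^n$ with $Ax+\phi(x)\ge0$, $Bx+\psi(x)\ge0$, $(Ax+\phi(x))^T(Bx+\psi(x))=0$, where $A,B\in\mathbb{R}^{n\times n}$ and $\phi,\psi:\mathbb{R}^n\to\mathbb{R}^n$ act componentwise. $\Omega$ is a positive diagonal matrix; $\|\phi(u)-\phi(v)\|\le L_1\|u-v\|$, $\|\psi(u)-\psi(v)\|\le L_2\|u-v\|$ for all $u,v$. The FPI method with splitting $A+\Omega B=M-N$ ($M$ nonsingular) and parameter $\tau>0$ generates from any $(x^0,y^0)$: $x^{k+1}=M^{-1}[Nx^k+y^k-\phi(x^k)-\Omega\psi(x^k)]$, $y^{k+1}=(1-\tau)y^k+\tau|(A-\Omega B)x^{k+1}+\phi(x^{k+1})-\Omega\psi(x^{k+1})|$, with $|\cdot|$ componentwise absolute value. $\|\cdot\|$ is the Euclidean norm / spectral norm, and $\|\cdot\|_\infty$ is the max-norm on $\mathbb{R}^2$ and the induced (max row sum) matrix norm. *)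

(* Defs.v *)
From HB Require Import structures.
From mathcomp Require Import all_boot all_order all_algebra.
From mathcomp Require Import all_classical all_reals all_analysis.
Set Implicit Arguments. Unset Strict Implicit. Unset Printing Implicit Defensive.
Import Order.TTheory GRing.Theory Num.Theory.
Import numFieldNormedType.Exports.
Local Open Scope classical_set_scope.
Local Open Scope ring_scope.

Section Defs.
Variable R : realType.

Definition enorm n (x : 'cV[R]_n) : R := Num.sqrt (\sum_i (x i 0) ^+ 2).

Definition specnorm n (A : 'M[R]_n) : R :=
  sup [set enorm (A *m x) | x in [set x : 'cV[R]_n | enorm x <= 1]].

Definition absv n (x : 'cV[R]_n) : 'cV[R]_n := map_mx (fun a => `|a|) x.

Definition nonneg_vec n (x : 'cV[R]_n) : Prop := forall i, 0 <= x i 0.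

Definition componentwise n (f : 'cV[R]_n -> 'cV[R]_n) : Prop :=
  exists g : 'I_n -> R -> R, forall x i, f x i 0 = g i (x i 0).

Definition pos_diag n (W : 'M[R]_n) : Prop :=
  is_diag_mx W /\ forall i, 0 < W i i.

Definition vncp_sol n (A B : 'M[R]_n) (phi psi : 'cV[R]_n -> 'cV[R]_n)
    (x : 'cV[R]_n) : Prop :=
  nonneg_vec (A *m x + phi x) /\ nonneg_vec (B *m x + psi x) /\
  \sum_i ((A *m x + phi x) i 0 * (B *m x + psi x) i 0) = 0.

Definition fpi_seq n (A B Omega M N : 'M[R]_n) (phi psi : 'cV[R]_n -> 'cV[R]_n)
    (tau : R) (x y : nat -> 'cV[R]_n) : Prop :=
  forall k,
    x k.+1 = invmx M *m (N *m x k + y k - phi (x k) - Omega *m psi (x k)) /\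
    y k.+1 = (1 - tau) *: y k +
             tau *: absv ((A - Omega *m B) *m x k.+1 + phi (x k.+1)
                          - Omega *m psi (x k.+1)).

Definition mx22 (a b c d : R) : 'M[R]_2 :=
  \matrix_(i < 2, j < 2)
    if i == 0 :> nat then (if j == 0 :> nat then a else b)
    else (if j == 0 :> nat then c else d).

Definition v2 (a b : R) : 'cV[R]_2 :=
  \col_(i < 2) if i == 0 :> nat then a else b.

Definition infnorm_v m (v : 'cV[R]_m) : R := \big[Num.max/0]_i `|v i 0|.
Definition infnorm_m m (T : 'M[R]_m) : R :=
  \big[Num.max/0]_i \sum_j `|T i j|.

End Defs.

(* Main.v *)
Require Import Defs.
From HB Require Import structures.
From mathcomp Require Import all_boot all_order all_algebra.
From mathcomp Require Import all_classical all_reals all_analysis.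
From mathcomp Require Import ring lra.
Import Order.TTheory GRing.Theory Num.Theory.
Import numFieldNormedType.Exports.
Set Implicit Arguments. Unset Strict Implicit.
Local Open Scope classical_set_scope.
Local Open Scope ring_scope.

Section Aux.
Variable R : realType.
Variable n : nat.
Implicit Types u v w : 'cV[R]_n.

Definition sq v : R := \sum_i (v i 0) ^+ 2.

Lemma sq_ge0 v : 0 <= sq v.
Proof. by apply: sumr_ge0 => i _; rewrite sqr_ge0. Qed.

Lemma enorm_ge0 v : 0 <= enorm v.
Proof. exact: sqrtr_ge0. Qed.

Lemma enormK v : enorm v ^+ 2 = sq v.
Proof. by rewrite /enorm sqr_sqrtr // sq_ge0. Qed.

Lemma enormZ a v : enorm (a *: v) = `|a| * enorm v.
Proof.
rewrite /enorm (eq_bigr (fun i => a ^+ 2 * v i 0 ^+ 2)); last first.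
  by move=> i _; rewrite mxE exprMn.
by rewrite -mulr_sumr sqrtrM ?sqr_ge0 // sqrtr_sqr.
Qed.

Lemma enormN v : enorm (- v) = enorm v.
Proof. by rewrite -scaleN1r enormZ normrN normr1 mul1r. Qed.

Lemma enorm0 : enorm (0 : 'cV[R]_n) = 0.
Proof. by rewrite -(scale0r (0 : 'cV[R]_n)) enormZ normr0 mul0r. Qed.

Lemma sq_eq0 v : sq v = 0 -> v = 0.
Proof.
move=> h; apply/matrixP => i j; rewrite (ord1 j) mxE.
have := psumr_eq0P (fun i _ => sqr_ge0 (v i 0)) h (i := i) isT.
by move/eqP; rewrite sqrf_eq0 => /eqP.
Qed.

Lemma enorm_eq0 v : enorm v = 0 -> v = 0.
Proof.
move=> h; apply: sq_eq0; rewrite -enormK h; by rewrite expr0n.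
Qed.

Lemma coord_le v (i : 'I_n) : `|v i 0| <= enorm v.
Proof.
rewrite -sqrtr_sqr /enorm ler_wsqrtr //.
rewrite (bigD1 i) //= lerDl; apply: sumr_ge0 => j _; exact: sqr_ge0.
Qed.

Lemma CS u v : \sum_i u i 0 * v i 0 <= enorm u * enorm v.
Proof.
have [hu|hu] := eqVneq (enorm u) 0.
  by rewrite (enorm_eq0 hu) enorm0 mul0r big1 // => i _; rewrite mxE mul0r.
have [hv|hv] := eqVneq (enorm v) 0.
  by rewrite (enorm_eq0 hv) enorm0 mulr0 big1 // => i _; rewrite mxE mulr0.
set a := enorm u; set b := enorm v.
have a0 : 0 < a by rewrite lt_neqAle eq_sym hu enorm_ge0.
have b0 : 0 < b by rewrite lt_neqAle eq_sym hv enorm_ge0.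
have H : 0 <= \sum_i (b * u i 0 - a * v i 0) ^+ 2 by apply: sumr_ge0 => i _; exact: sqr_ge0.
have E : \sum_i (b * u i 0 - a * v i 0) ^+ 2 =
   b ^+ 2 * sq u + a ^+ 2 * sq v - 2 * a * b * \sum_i u i 0 * v i 0.
  rewrite /sq !mulr_sumr -big_split /= -sumrB; apply: eq_bigr => i _; ring.
have Ka : sq u = a ^+ 2 by rewrite enormK.
have Kb : sq v = b ^+ 2 by rewrite enormK.
move: H; rewrite E Ka Kb => H.
have ab0 : 0 < a * b by rewrite mulr_gt0.
rewrite -(ler_pM2l ab0).
have -> : a * b * (a * b) = a ^+ 2 * b ^+ 2 by ring.
set S := \sum_i _ in H *.
have : 2 * (a * b * S) <= 2 * (a ^+ 2 * b ^+ 2).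
  have -> : 2 * (a * b * S) = 2 * a * b * S by ring.
  lra.
rewrite ler_pM2l //.
Qed.

Lemma enormD u v : enorm (u + v) <= enorm u + enorm v.
Proof.
have h0 : 0 <= enorm u + enorm v by rewrite addr_ge0 ?enorm_ge0.
rewrite -(ger0_norm h0) -sqrtr_sqr /enorm ler_wsqrtr //.
rewrite -/(enorm u) -/(enorm v) sqrrD !enormK.
have -> : \sum_i (u + v) i 0 ^+ 2 = sq u + sq v + 2 * \sum_i u i 0 * v i 0.
  rewrite /sq mulr_sumr -!big_split /=; apply: eq_bigr => i _; rewrite !mxE; ring.
have := CS u v; lra.
Qed.

Lemma enormB u v : enorm (u - v) <= enorm u + enorm v.
Proof. by rewrite -(enormN v); exact: enormD. Qed.

Lemma enorm_absv u v : enorm (absv u - absv v) <= enorm (u - v).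
Proof.
rewrite /enorm ler_wsqrtr //; apply: ler_sum => i _; rewrite !mxE.
rewrite -real_normK ?num_real // -[X in _ <= X]real_normK ?num_real //.
rewrite ler_pXn2r ?nnegrE ?normr_ge0 //; exact: ler_dist_dist.
Qed.

Lemma enorm_le_l1 v : enorm v <= \sum_i `|v i 0|.
Proof.
have h0 : 0 <= \sum_i `|v i 0| by apply: sumr_ge0 => i _; exact: normr_ge0.
rewrite -(ger0_norm h0) -sqrtr_sqr /enorm ler_wsqrtr //.
rewrite expr2 mulr_sumr; apply: ler_sum => i _.
rewrite -real_normK ?num_real // expr2; apply: ler_wpM2r; first exact: normr_ge0.
by rewrite (bigD1 i) //= lerDl; apply: sumr_ge0 => j _; exact: normr_ge0.
Qed.

End Aux.

Section Spec.
Variable R : realType.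
Variable n : nat.
Implicit Types u v w : 'cV[R]_n.

Lemma spec_has_sup (A : 'M[R]_n) :
  has_sup [set enorm (A *m x) | x in [set x : 'cV[R]_n | enorm x <= 1]].
Proof.
split.
  exists 0, 0 => //=; last by rewrite mulmx0 enorm0.
  by rewrite enorm0.
exists (\sum_i \sum_j `|A i j|) => r [x /= hx <-].
apply: (le_trans (enorm_le_l1 (A *m x))); apply: ler_sum => i _ /=.
rewrite mxE; apply: le_trans (ler_norm_sum _ _ _) _; apply: ler_sum => j _.
rewrite normrM -[X in _ <= X]mulr1 ler_wpM2l ?normr_ge0 //.
exact: le_trans (coord_le x j) hx.
Qed.

Lemma specnorm_ge0 (A : 'M[R]_n) : 0 <= specnorm A.
Proof.
apply: (sup_upper_bound (spec_has_sup A)).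
exists 0 => /=; first by rewrite enorm0.
by rewrite mulmx0 enorm0.
Qed.

Lemma specnorm_le (A : 'M[R]_n) v : enorm (A *m v) <= specnorm A * enorm v.
Proof.
have [h|h] := eqVneq (enorm v) 0.
  by rewrite (enorm_eq0 h) mulmx0 enorm0 mulr0.
have v0 : 0 < enorm v by rewrite lt_neqAle eq_sym h enorm_ge0.
set c := (enorm v)^-1.
have c0 : 0 < c by rewrite invr_gt0.
have H1 : enorm (c *: v) = 1 by rewrite enormZ gtr0_norm // mulVf.
have := sup_upper_bound (spec_has_sup A) (x := enorm (A *m (c *: v))).
have hin : [set enorm (A *m x) | x in [set x : 'cV[R]_n | enorm x <= 1]] (enorm (A *m (c *: v))).
  by exists (c *: v) => //=; rewrite H1.
move=> /(_ hin).
rewrite -scalemxAr enormZ gtr0_norm // -(ler_pM2r v0) mulrAC /c mulVf // mul1r.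
by rewrite mulrC.
Qed.

End Spec.

Section Fix.
Variable R : realType.
Variable n : nat.
Variables (A B Omega M N : 'M[R]_n) (phi psi : 'cV[R]_n -> 'cV[R]_n) (L1 L2 : R).

Definition Wf (z : 'cV[R]_n) := (A - Omega *m B) *m z + phi z - Omega *m psi z.

Lemma diag_mul (v : 'cV[R]_n) i : is_diag_mx Omega -> (Omega *m v) i 0 = Omega i i * v i 0.
Proof.
move=> /is_diag_mxP hd; rewrite mxE (bigD1 i) //= big1 ?addr0 // => j hj.
by rewrite hd ?mul0r // eq_sym.
Qed.

Lemma vncp_fixed z : pos_diag Omega -> A + Omega *m B = M - N -> M \in unitmx ->
  vncp_sol A B phi psi z ->
  z = invmx M *m (N *m z + absv (Wf z) - phi z - Omega *m psi z).
Proof.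
move=> [hd hp] hM Mu [hu [hv h0]].
set u := A *m z + phi z; set v := B *m z + psi z.
have hab : absv (Wf z) = u + Omega *m v.
  apply/matrixP => i j; rewrite (ord1 j) [LHS]mxE [RHS]mxE.
  have e1 : Wf z i 0 = u i 0 - Omega i i * v i 0.
    rewrite /Wf /u /v -(diag_mul _ _ hd) mulmxBl -mulmxA mulmxDr !mxE; ring.
  rewrite e1 (diag_mul _ _ hd).
  have hi := psumr_eq0P (fun i _ => mulr_ge0 (hu i) (hv i)) h0 (i := i) isT.
  have := hu i; have := hv i; have := hp i.
  move/eqP: hi; rewrite mulf_eq0 => /orP[] /eqP ->.
    move=> p q _; rewrite sub0r add0r normrN ger0_norm // mulr_ge0 // ltW //.
  by move=> _ _ q; rewrite mulr0 subr0 addr0 ger0_norm.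
have hM' : M = A + Omega *m B + N by rewrite hM subrK.
rewrite hab.
have -> : N *m z + (u + Omega *m v) - phi z - Omega *m psi z = M *m z.
  rewrite hM' /u /v mulmxDr !mulmxDl mulmxA.
  set a := A *m z; set b := Omega *m B *m z; set c := N *m z; set d := phi z;
    set e := Omega *m psi z.
  apply/matrixP => i j; rewrite !mxE; ring.
by rewrite mulKmx.
Qed.


Lemma enorm4 (p q r s : 'cV[R]_n) : enorm (p + q - r - s) <= enorm p + enorm q + enorm r + enorm s.
Proof.
apply: le_trans (enormB _ _) _; rewrite lerD2r.
apply: le_trans (enormB _ _) _; rewrite lerD2r.
exact: enormD.
Qed.

Lemma vec4 (a b c d a' b' c' d' : 'cV[R]_n) :
  (a + b - c - d) - (a' + b' - c' - d') = (a - a') + (b - b') - (c - c') - (d - d').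
Proof. apply/matrixP => i j; rewrite !mxE; ring. Qed.

Hypothesis hphi : forall u v, enorm (phi u - phi v) <= L1 * enorm (u - v).
Hypothesis hpsi : forall u v, enorm (psi u - psi v) <= L2 * enorm (u - v).

Lemma est_x x1 y1 xs ys :
  enorm (invmx M *m (N *m x1 + y1 - phi x1 - Omega *m psi x1)
         - invmx M *m (N *m xs + ys - phi xs - Omega *m psi xs))
  <= specnorm (invmx M) * ((specnorm N + L1 + L2 * specnorm Omega) * enorm (x1 - xs)
                           + enorm (y1 - ys)).
Proof.
rewrite -mulmxBr; apply: le_trans (specnorm_le _ _) _.
apply: ler_wpM2l; first exact: specnorm_ge0.
rewrite vec4 -!mulmxBr; apply: le_trans (enorm4 _ _ _ _) _.
have h1 := specnorm_le N (x1 - xs).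
have h2 := hphi x1 xs.
have h3 := specnorm_le Omega (psi x1 - psi xs).
have h4 := hpsi x1 xs.
have h5 := specnorm_ge0 Omega.
have h6 : specnorm Omega * enorm (psi x1 - psi xs) <= specnorm Omega * (L2 * enorm (x1 - xs)).
  exact: ler_wpM2l.
lra.
Qed.

Lemma est_W a b :
  enorm (Wf a - Wf b) <= (specnorm (A - Omega *m B) + L1 + L2 * specnorm Omega) * enorm (a - b).
Proof.
have -> : Wf a - Wf b = (A - Omega *m B) *m (a - b) + (phi a - phi b) - Omega *m (psi a - psi b).
  rewrite /Wf !mulmxBr; apply/matrixP => i j; rewrite !mxE; ring.
apply: le_trans (enormB _ _) _.
apply: le_trans (lerD (enormD _ _) (lexx _)) _.
have h1 := specnorm_le (A - Omega *m B) (a - b).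
have h2 := hphi a b.
have h3 := specnorm_le Omega (psi a - psi b).
have h4 := hpsi a b.
have h5 := specnorm_ge0 Omega.
have h6 : specnorm Omega * enorm (psi a - psi b) <= specnorm Omega * (L2 * enorm (a - b)).
  exact: ler_wpM2l.
lra.
Qed.

Lemma est_y (tau : R) y1 x2 xs : 0 <= tau ->
  enorm (((1 - tau) *: y1 + tau *: absv (Wf x2)) - absv (Wf xs))
  <= `|1 - tau| * enorm (y1 - absv (Wf xs))
     + tau * ((specnorm (A - Omega *m B) + L1 + L2 * specnorm Omega) * enorm (x2 - xs)).
Proof.
move=> t0.
have -> : ((1 - tau) *: y1 + tau *: absv (Wf x2)) - absv (Wf xs) =
   (1 - tau) *: (y1 - absv (Wf xs)) + tau *: (absv (Wf x2) - absv (Wf xs)).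
  apply/matrixP => i j; rewrite !mxE; ring.
apply: le_trans (enormD _ _) _; rewrite !enormZ (ger0_norm t0) lerD2l.
apply: ler_wpM2l => //; apply: le_trans (enorm_absv _ _) _; exact: est_W.
Qed.

End Fix.

Section Scal.
Variable R : realType.

Lemma big2max (F : 'I_2 -> R) : 0 <= F ord0 ->
  \big[Num.max/0]_i F i = Num.max (F ord0) (F ord_max).
Proof.
move=> h0; apply/le_anti/andP; split.
  apply: bigmax_le => [|i _]; first by rewrite le_max h0.
  case: i => [[|[|k]] hk] //=; rewrite le_max.
    by rewrite (_ : Ordinal hk = ord0) ?lexx //; apply: val_inj.
  by rewrite (_ : Ordinal hk = ord_max) ?lexx ?orbT //; apply: val_inj.
by rewrite ge_max !le_bigmax.
Qed.

Lemma infnorm_v2 (a b : R) : infnorm_v (v2 a b) = Num.max `|a| `|b|.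
Proof. by rewrite /infnorm_v big2max ?normr_ge0 // !mxE. Qed.

Lemma infnorm_m22 (a b c d : R) :
  infnorm_m (mx22 a b c d) = Num.max (`|a| + `|b|) (`|c| + `|d|).
Proof.
rewrite /infnorm_m big2max; last by apply: sumr_ge0 => j _; exact: normr_ge0.
by rewrite !big_ord_recr !big_ord0 /= !add0r !mxE /=.
Qed.

Lemma core (al be ga tau de e f e' f' : R) :
  0 <= al -> 0 <= al * be -> 0 <= ga -> ga <= de -> 0 <= tau -> 0 <= e -> 0 <= f ->
  e' <= al * (be * e + f) ->
  f' <= `|1 - tau| * f + tau * (ga * e') ->
  Num.max (de * e') f' <= Num.max (al * be + al * de) (tau * (al * be) + tau * (al * ga) + `|1 - tau|)
                           * Num.max (de * e) f.
Proof.
move=> a0 ab0 g0 gd t0 e0 f0 he hf.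
set m := Num.max (de * e) f.
have hm1 : de * e <= m by rewrite le_max lexx.
have hm2 : f <= m by rewrite le_max lexx orbT.
have d0 : 0 <= de by apply: le_trans gd.
have hm3 : ga * e <= m by apply: le_trans hm1; apply: ler_wpM2r.
have m0 : 0 <= m by apply: le_trans hm2.
set r1 := al * be + al * de; set r2 := tau * (al * be) + tau * (al * ga) + `|1 - tau|.
have hr1 : r1 * m <= Num.max r1 r2 * m by apply: ler_wpM2r => //; rewrite le_max lexx.
have hr2 : r2 * m <= Num.max r1 r2 * m by apply: ler_wpM2r => //; rewrite le_max lexx orbT.
rewrite ge_max; apply/andP; split.
  apply: le_trans hr1.
  have : de * e' <= de * (al * (be * e + f)) by apply: ler_wpM2l.
  have h1 : al * be * (de * e) <= al * be * m by apply: ler_wpM2l.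
  have h2 : al * de * f <= al * de * m by apply: ler_wpM2l => //; apply: mulr_ge0.
  have -> : de * (al * (be * e + f)) = al * be * (de * e) + al * de * f by ring.
  rewrite /r1 mulrDl; lra.
apply: le_trans hr2.
have ga0 : 0 <= tau * ga by apply: mulr_ge0.
have : tau * (ga * e') <= tau * (ga * (al * (be * e + f))).
  by apply: ler_wpM2l => //; apply: ler_wpM2l.
have -> : tau * (ga * (al * (be * e + f))) = tau * (al * be) * (ga * e) + tau * (al * ga) * f by ring.
have h1 : tau * (al * be) * (ga * e) <= tau * (al * be) * m by apply: ler_wpM2l => //; apply: mulr_ge0.
have h2 : tau * (al * ga) * f <= tau * (al * ga) * m by apply: ler_wpM2l => //; apply: mulr_ge0 => //; apply: mulr_ge0.
have h3 : `|1 - tau| * f <= `|1 - tau| * m by apply: ler_wpM2l.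
rewrite /r2 !mulrDl; lra.
Qed.

Lemma iff_part (s tau : R) : 0 <= s -> 0 < tau ->
  (Num.max s (tau * s + `|1 - tau|) < 1 <->
   s < 1 /\ 0 < tau /\ tau < 2 / (s + 1)).
Proof.
move=> s0 t0; have s1 : 0 < s + 1 by lra.
rewrite gt_max ltr_pdivlMr //; split.
  move=> /andP[h1 h2]; split => //; split => //.
  have [t1|t1] := lerP tau 1.
    move: h2; rewrite ger0_norm; last lra.
    nra.
  move: h2; rewrite ler0_norm; last lra.
  lra.
move=> [h1 [_ h2]]; apply/andP; split; first exact: h1.
have [t1|t1] := lerP tau 1.
  nra.
nra.
Qed.

Lemma geom (q : R) (W : nat -> R) : 0 <= q -> (forall k, W k.+1 <= q * W k) ->
  forall k, W k <= q ^+ k * W 0%N.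
Proof.
move=> q0 h; elim => [|k ih]; first by rewrite expr0 mul1r.
apply: le_trans (h k) _; rewrite exprS -mulrA; exact: ler_wpM2l.
Qed.

Lemma enorm_dim0 (v : 'cV[R]_0) : enorm v = 0.
Proof. by rewrite /enorm big_ord0 sqrtr0. Qed.

Lemma specnorm_dim0 (A : 'M[R]_0) : specnorm A = 0.
Proof.
apply/eqP; rewrite eq_le specnorm_ge0 andbT.
apply: ge_sup; first exact: (spec_has_sup A).1.
by move=> r [x _ <-]; rewrite enorm_dim0.
Qed.

Lemma lip_ge0 n (f : 'cV[R]_n -> 'cV[R]_n) L : (0 < n)%N ->
  (forall u v, enorm (f u - f v) <= L * enorm (u - v)) -> 0 <= L.
Proof.
move=> n0 h; rewrite leNgt; apply/negP => L0.
set v1 : 'cV[R]_n := const_mx 1.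
have hp : 0 < enorm (0 - v1).
  rewrite lt_neqAle enorm_ge0 andbT eq_sym; apply/eqP => /enorm_eq0.
  move/matrixP => /(_ (Ordinal n0) 0); rewrite !mxE; lra.
have := h 0 v1; have := enorm_ge0 (f 0 - f v1); nra.
Qed.

End Scal.

Unset Implicit Arguments. Set Strict Implicit.

Theorem theorem3p2 (R : realType) (n : nat) (A B Omega M N : 'M[R]_n)
    (phi psi : 'cV[R]_n -> 'cV[R]_n) (L1 L2 tau : R)
    (x y : nat -> 'cV[R]_n) (xstar : 'cV[R]_n) :
  pos_diag Omega ->
  componentwise phi -> componentwise psi ->
  (forall u v, enorm (phi u - phi v) <= L1 * enorm (u - v)) ->
  (forall u v, enorm (psi u - psi v) <= L2 * enorm (u - v)) ->
  A + Omega *m B = M - N ->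
  M \in unitmx ->
  0 < tau ->
  fpi_seq A B Omega M N phi psi tau x y ->
  vncp_sol A B phi psi xstar ->
  let alpha := specnorm (invmx M) in
  let beta := specnorm N + L1 + L2 * specnorm Omega in
  let gamma := specnorm (A - Omega *m B) + L1 + L2 * specnorm Omega in
  let ystar := absv ((A - Omega *m B) *m xstar + phi xstar - Omega *m psi xstar) in
  let E := fun k => v2 (gamma * enorm (x k - xstar)) (enorm (y k - ystar)) in
  let T := mx22 (alpha * beta) (alpha * gamma)
                (tau * alpha * beta) (tau * alpha * gamma + `|1 - tau|) in
  (forall k, infnorm_v (E k.+1) <= infnorm_m T * infnorm_v (E k)) /\
  (infnorm_m T < 1 <->
     alpha * (beta + gamma) < 1 /\ 0 < tau /\ tau < 2 / (alpha * (beta + gamma) + 1)) /\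
  (alpha * (beta + gamma) < 1 /\ 0 < tau /\ tau < 2 / (alpha * (beta + gamma) + 1) ->
     x @ \oo --> xstar /\
     (forall z, vncp_sol A B phi psi z -> z = xstar)).
Proof.
move=> hOm _ _ hphi hpsi hM Mu t0 hseq hsol alpha beta gamma ystar E T.
have a0 : 0 <= alpha by exact: specnorm_ge0.
have fixz z (hz : vncp_sol A B phi psi z) := vncp_fixed hOm hM Mu hz.
have fixed := fixz xstar hsol.
pose e k := enorm (x k - xstar).
pose f k := enorm (y k - ystar).
have e0 k : 0 <= e k by exact: enorm_ge0.
have f0 k : 0 <= f k by exact: enorm_ge0.
have step_e k : e k.+1 <= alpha * (beta * e k + f k).
  have := est_x Omega M N hphi hpsi (x k) (y k) xstar ystar.
  by rewrite -(hseq k).1 -fixed.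
have step_f k : f k.+1 <= `|1 - tau| * f k + tau * (gamma * e k.+1).
  rewrite /f (hseq k).2.
  exact: (est_y A B Omega hphi hpsi (y k) (x k.+1) xstar (ltW t0)).
have hz : (n = 0)%N \/ (0 <= L1 /\ 0 <= L2).
  have [->|np] := posnP n; first by left.
  by right; split; [exact: lip_ge0 hphi | exact: lip_ge0 hpsi].
have [ab0 ag0] : 0 <= alpha * beta /\ 0 <= alpha * gamma.
  case: hz => [n0|[l1 l2]].
    by rewrite /alpha; move: (invmx M); rewrite n0 => P; rewrite specnorm_dim0 !mul0r.
  have s0 := specnorm_ge0 Omega.
  split; apply: mulr_ge0 => //; rewrite /beta /gamma; apply: addr_ge0;
    try apply: addr_ge0; try exact: specnorm_ge0; try done; exact: mulr_ge0.
have hT : infnorm_m T = Num.max (alpha * (beta + gamma))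
              (tau * (alpha * (beta + gamma)) + `|1 - tau|).
  have p3 : 0 <= tau * alpha * beta by rewrite -mulrA; apply: mulr_ge0 => //; exact: ltW.
  have p4 : 0 <= tau * alpha * gamma + `|1 - tau|.
    by apply: addr_ge0 => //; rewrite -mulrA; apply: mulr_ge0 => //; exact: ltW.
  rewrite /T infnorm_m22 (ger0_norm ab0) (ger0_norm ag0) (ger0_norm p3) (ger0_norm p4).
  by congr (Num.max _ _); ring.
have s0 : 0 <= alpha * (beta + gamma) by rewrite mulrDr; exact: addr_ge0.
split.
  move=> k; rewrite /E !infnorm_v2 hT.
  case: hz => [n0|[l1 l2]].
    move: (x k.+1 - xstar) (x k - xstar) (y k.+1 - ystar) (y k - ystar).
    rewrite n0 => p q r u.
    by rewrite !enorm_dim0 mulr0 normr0 maxxx mulr0.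
  have g0 : 0 <= gamma.
    rewrite /gamma; apply: addr_ge0; [apply: addr_ge0 => //; exact: specnorm_ge0|].
    by apply: mulr_ge0 => //; exact: specnorm_ge0.
  rewrite (ger0_norm (mulr_ge0 g0 (e0 k))) (ger0_norm (mulr_ge0 g0 (e0 k.+1))).
  rewrite (ger0_norm (f0 k)) (ger0_norm (f0 k.+1)).
  have eqq : Num.max (alpha*beta + alpha*gamma) (tau*(alpha*beta) + tau*(alpha*gamma) + `|1-tau|)
    = Num.max (alpha*(beta+gamma)) (tau*(alpha*(beta+gamma)) + `|1-tau|).
    by congr (Num.max _ _); ring.
  rewrite -eqq.
  exact: (core a0 ab0 g0 (lexx gamma) (ltW t0) (e0 k) (f0 k) (step_e k) (step_f k)).
split.
  by rewrite hT; apply: iff_part.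
move=> [hs [_ ht]]; split; last first.
  move=> z hzs; have fz := fixz z hzs.
  have := est_x Omega M N hphi hpsi z (absv (Wf A B Omega phi psi z)) xstar ystar.
  rewrite -fixed -fz => h1.
  have h2 : enorm (absv (Wf A B Omega phi psi z) - ystar) <= gamma * enorm (z - xstar).
    apply: le_trans (enorm_absv _ _) _; exact: est_W.
  have h3 : enorm (z - xstar) <= alpha * (beta + gamma) * enorm (z - xstar).
    apply: le_trans h1 _; rewrite -mulrA; apply: ler_wpM2l => //.
    rewrite /beta /gamma in h2 *; nra.
  have h4 := enorm_ge0 (z - xstar).
  have h5 : enorm (z - xstar) = 0 by nra.
  by apply/eqP; rewrite -subr_eq0; apply/eqP; exact: enorm_eq0.
case: hz => [n0|[l1 l2]].
  have hx : x = fun=> xstar.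
    apply/funext => k; apply/matrixP => -[i hi] j.
    by exfalso; move: hi; rewrite n0.
  rewrite hx; exact: cvg_cst.
have g0 : 0 <= gamma.
  rewrite /gamma; apply: addr_ge0; [apply: addr_ge0 => //; exact: specnorm_ge0|].
  by apply: mulr_ge0 => //; exact: specnorm_ge0.
set s := alpha * (beta + gamma) in hs ht s0.
set c := (1 - s) / (2 * alpha + 1).
have a1 : 0 < 2 * alpha + 1 by lra.
have hc : c * (2 * alpha + 1) = 1 - s by rewrite /c divfK // gt_eqF.
have c0 : 0 < c by rewrite /c divr_gt0 // subr_gt0.
pose de := gamma + c.
have hd1 : gamma <= de by rewrite /de lerDl ltW.
have hd0 : 0 < de by rewrite /de; lra.
have hac : alpha * c < 1 - s.
  have h1 : (alpha * c) * (2 * alpha + 1) = alpha * (1 - s) by rewrite -mulrA hc.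
  rewrite -(ltr_pM2r a1) h1.
  have : 0 < (1 - s) * (alpha + 1) by apply: mulr_gt0; lra.
  nra.
have hd2 : alpha * beta + alpha * de < 1.
  have : s = alpha * beta + alpha * gamma by rewrite /s mulrDr.
  rewrite /de mulrDr; lra.
pose q := Num.max (alpha * beta + alpha * de)
   (tau * (alpha * beta) + tau * (alpha * gamma) + `|1 - tau|).
have hq1 : q < 1.
  rewrite /q gt_max hd2 /=.
  have := (iff_part s0 t0).2 (conj hs (conj t0 ht)).
  rewrite gt_max => /andP[_].
  have -> : tau * (alpha * beta) + tau * (alpha * gamma) = tau * s by rewrite /s; ring.
  done.
have hq0 : 0 <= q.
  rewrite /q le_max; apply/orP; right; apply: addr_ge0 => //.
  by apply: addr_ge0; apply: mulr_ge0 => //; exact: ltW.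
pose W k := Num.max (de * e k) (f k).
have hW k : W k.+1 <= q * W k.
  exact: (core a0 ab0 g0 hd1 (ltW t0) (e0 k) (f0 k) (step_e k) (step_f k)).
have hg := geom hq0 hW.
have W00 : 0 <= W 0%N by rewrite /W le_max (f0 0%N) orbT.
apply/cvgrPdist_le => eps eps0.
have hq : `|q| < 1 by rewrite ger0_norm.
have epos : 0 < eps * de / (W 0%N + 1).
  by rewrite divr_gt0 ?mulr_gt0 //; lra.
move: (cvg_expr hq) => /cvgrPdist_le /(_ _ epos).
apply: filterS => k hk.
have h1 : de * e k <= W k by rewrite /W le_max lexx.
have h2 := hg k.
have h3 : q ^+ k <= eps * de / (W 0%N + 1).
  by apply: le_trans hk; rewrite sub0r normrN real_ler_norm // num_real.
have h4 : q ^+ k * W 0%N <= eps * de / (W 0%N + 1) * W 0%N by apply: ler_wpM2r.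
have h5 : eps * de / (W 0%N + 1) * W 0%N <= eps * de.
  rewrite mulrAC ler_pdivrMr; last lra.
  apply: ler_wpM2l; [apply: mulr_ge0; lra | lra].
have h6 : e k <= eps.
  rewrite -(ler_pM2l hd0); lra.
apply: le_trans h6.
have -> : xstar - x k = - (x k - xstar) by rewrite opprB.
change (mx_norm (- (x k - xstar)) <= e k).
rewrite mx_normN mx_normrE; apply: bigmax_le => [|[i j] _]; first exact: e0.
by rewrite /= (ord1 j); exact: coord_le.
Qed.
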